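(* Let $T$ be a countable tree with root $o$, and let $Q=(q(x,y))$ be a stochastic matrix on $T$ with $q(x,y)>0$ iff $x=y^-$. Let $\lambda\in\mathbb{C}\setminus\{0\}$. The formula $$h(x)=\int_{\partial T}K_Q(x,\xi\mid\lambda)\,d\sigma(\xi)=\frac{\lambda^{|x|}}{q^{(|x|)}(o,x)}\,\sigma(\partial T_x),\qquad x\in T,$$ gives a one-to-one correspondence $\sigma\mapsto h$ between complex distributions $\sigma$ on $\{\partial T_x:x\in T\}$ and $\lambda$-harmonic functions $h$ for $Q$, i.e. functions $h:T\to\mathbb{C}$ with $\sum_{y:\,y^-=x}q(x,y)h(y)=\lambda h(x)$ for all $x$, the sum converging absolutely.
   Context: $|x|=d(o,x)$. For $x\ne o$, $x^-$ is the neighbour of $x$ closer to $o$. $T_x=\{w:x\in\pi(o,w)\}$, where $\pi$ denotes geodesics, with $T_o=T$. $\partial T$ is the set of ends (classes of geodesic rays modulo finite initial segments), and $\partial T_x$ is the set of ends with a representative ray in $T_x$. For $\pi(o,x)=[o=x_0,\dots,x_n=x]$, $q^{(n)}(o,x)=q(x_0,x_1)\cdots q(x_{n-1},x_n)$, with $q^{(0)}(o,o)=1$. $K_Q(x,\xi\mid\lambda)=\lambda^{|x|}/q^{(|x|)}(o,x)$ if $x$ lies on the ray $\pi(o,\xi)$, and $0$ otherwise. A complex distribution is $\sigma:\{\partial T_x\}\to\mathbb{C}$ with $\sigma(\partial T_x)=\sum_{y^-=x}\sigma(\partial T_y)$ for all $x$, absolutely convergent. The integral of a function constant on $\partial T_x$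 and $0$ off $\partial T_x$ is that constant times $\sigma(\partial T_x)$. *)

(* Defs.v *)
From HB Require Import structures.
From mathcomp Require Import all_boot all_order all_algebra.
From mathcomp Require Import complex.
From mathcomp Require Import all_classical all_reals topology normedtype sequences.
Set Implicit Arguments. Unset Strict Implicit. Unset Printing Implicit Defensive.
Import Order.TTheory GRing.Theory Num.Theory numFieldNormedType.Exports.
Local Open Scope classical_set_scope.
Local Open Scope ring_scope.

(* A rooted tree on a countable vertex type V: root o and parent map x |-> x^-
   (the value parent o is irrelevant; o has no parent).  Every vertex reaches
   the root by iterating the parent map, so the graph with edges {y, y^-},
   y <> o, is a tree rooted at o; every rooted tree arises this way. *)
Record rooted_tree (V : countType) := RootedTree {
  root : V;
  parent : V -> V;
  parent_reach : forall x : V, exists n, iter n parent x == root }.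

Definition depth (V : countType) (T : rooted_tree V) (x : V) : nat :=
  ex_minn (parent_reach T x).

Definition is_child (V : countType) (T : rooted_tree V) (x y : V) : bool :=
  (y != root T) && (parent T y == x).

(* q^{(|x|)}(o,x) = q(x_0,x_1) ... q(x_{n-1},x_n) along pi(o,x) *)
Definition qpath (V : countType) (R : numDomainType) (T : rooted_tree V)
    (q : V -> V -> R) (x : V) : R :=
  \prod_(i < depth T x) q (iter i.+1 (parent T) x) (iter i (parent T) x).

(* Sums over a countable set A \subseteq V, via the enumeration of V given by
   pickle_inv (each vertex occurs exactly once). *)
Definition cterm (V : countType) (K : zmodType) (A : pred V) (f : V -> K)
    (n : nat) : K :=
  if @pickle_inv V n is Some x then (if A x then f x else 0) else 0.

Definition abs_summable (V : countType) (K : numFieldType) (A : pred V)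
    (f : V -> K) : Prop :=
  cvgn (series (fun n => `|cterm A f n|)).

(* value of \sum_{x in A} f x (independent of the order when absolutely
   convergent) *)
Definition csum (V : countType) (K : numFieldType) (A : pred V)
    (f : V -> K) : K :=
  limn (series (cterm A f)).

Definition tree_stochastic (V : countType) (R : realType) (T : rooted_tree V)
    (q : V -> V -> R) : Prop :=
  (forall x y, 0 <= q x y) /\
  (forall x, series (cterm predT (q x)) @ \oo --> (1 : R)) /\
  (forall x y, 0 < q x y <-> is_child T x y).

(* complex distribution, identified with the function x |-> sigma(dT_x) *)
Definition complex_distribution (V : countType) (R : realType)
    (T : rooted_tree V) (sigma : V -> R[i]) : Prop :=
  forall x, abs_summable (is_child T x) sigma /\
            sigma x = csum (is_child T x) sigma.

Definition lambda_harmonic (V : countType) (R : realType) (T : rooted_tree V)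
    (q : V -> V -> R) (lambda : R[i]) (h : V -> R[i]) : Prop :=
  forall x, abs_summable (is_child T x) (fun y => ((q x y)%:C)%C * h y) /\
            csum (is_child T x) (fun y => ((q x y)%:C)%C * h y) = lambda * h x.

(* K_Q(x,xi|lambda) = lambda^|x| / q^{(|x|)}(o,x) on dT_x, so that
   int K_Q(x,.|lambda) dsigma = lambda^|x| / q^{(|x|)}(o,x) * sigma(dT_x) *)
Definition poisson_transform (V : countType) (R : realType) (T : rooted_tree V)
    (q : V -> V -> R) (lambda : R[i]) (sigma : V -> R[i]) : V -> R[i] :=
  fun x => lambda ^+ depth T x / ((qpath T q x)%:C)%C * sigma x.

(* Main.v *)
Require Import Defs.
From HB Require Import structures.
From mathcomp Require Import all_boot all_order all_algebra.
From mathcomp Require Import complex.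
From mathcomp Require Import all_classical all_reals topology normedtype sequences.
From mathcomp Require Import ring.
Import Order.TTheory GRing.Theory Num.Theory numFieldNormedType.Exports.
Local Open Scope classical_set_scope.
Local Open Scope ring_scope.

Lemma ctermZ (V : countType) (K : numFieldType) (A : pred V) (f : V -> K)
  (c : K) n : cterm A (fun y => c * f y) n = c * cterm A f n.
Proof.
rewrite /cterm; case: (pickle_inv n) => [x|]; last by rewrite mulr0.
by case: (A x); rewrite ?mulr0.
Qed.

Lemma seriesZ (V : countType) (K : numFieldType) (A : pred V) (f : V -> K)
  (c : K) : series (cterm A (fun y => c * f y)) = (fun n => c * series (cterm A f) n).
Proof.
apply: funext => n; rewrite /series /= mulr_sumr.
by apply: eq_bigr => k _; rewrite ctermZ.
Qed.

Lemma abs_summableZ (V : countType) (K : numFieldType) (A : pred V) (f : V -> K)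
  (c : K) : abs_summable A f -> abs_summable A (fun y => c * f y).
Proof.
rewrite /abs_summable => H.
have -> : (fun n => `|cterm A (fun y => c * f y) n|) = (fun n => `|c| * `|cterm A f n|).
  by apply: funext => n; rewrite ctermZ normrM.
rewrite (_ : series _ = (fun n => `|c| * series (fun n => `|cterm A f n|) n)).
  exact: is_cvgMl_tmp.
apply: funext => n; rewrite /series /= mulr_sumr.
by apply: eq_bigr.
Qed.


Lemma csumZ (V : countType) (K : numFieldType) (A : pred V) (f : V -> K)
  (c : K) : c != 0 -> csum A (fun y => c * f y) = c * csum A f.
Proof.
move=> c0; rewrite /csum seriesZ.
set u := series (cterm A f).
case: (pselect (cvgn u)) => Hc.
  have H1 : (fun n => c * u n) @ \oo --> c * limn u by exact: cvgMl_tmp.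
  exact: (cvg_lim _ H1).
have H2 : ~ cvgn (fun n => c * u n).
  move=> H; apply: Hc.
  have := is_cvgMlE_tmp u c0. rewrite /GRing.mul_fun /= => <-. exact: H.
by rewrite (dvgP H2) (dvgP Hc) mulr0.
Qed.
Lemma eq_cterm (V : countType) (K : numFieldType) (A : pred V) (f g : V -> K) :
  (forall y, A y -> f y = g y) -> cterm A f = cterm A g.
Proof.
move=> E; apply: funext => n; rewrite /cterm; case: (pickle_inv n) => // x.
by case Ax: (A x) => //; rewrite E.
Qed.

Arguments eq_cterm {V K A f g}.

Lemma eq_abs_summable (V : countType) (K : numFieldType) (A : pred V) (f g : V -> K) :
  (forall y, A y -> f y = g y) -> abs_summable A f -> abs_summable A g.
Proof. by move=> E; rewrite /abs_summable (eq_cterm E). Qed.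

Arguments eq_abs_summable {V K A f g}.

Lemma eq_csum (V : countType) (K : numFieldType) (A : pred V) (f g : V -> K) :
  (forall y, A y -> f y = g y) -> csum A f = csum A g.
Proof. by move=> E; rewrite /csum (eq_cterm E). Qed.

Arguments eq_csum {V K A f g}.
Arguments abs_summableZ {V K A f}.
Arguments csumZ {V K A f c}.

Section Tree.
Variable V : countType.
Variable T : rooted_tree V.

Lemma depth_spec x : iter (depth T x) (parent T) x == Defs.root T /\
  forall n, iter n (parent T) x == Defs.root T -> (depth T x <= n)%N.
Proof.
rewrite /depth; case: ex_minnP => m Hm Hmin; split => //.
Qed.

Lemma depth_child {x y} : is_child T x y -> depth T y = (depth T x).+1.
Proof.
case/andP => yr /eqP px.
have [Hy Hymin] := depth_spec y.
have [Hx Hxmin] := depth_spec x.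
apply/eqP; rewrite eqn_leq; apply/andP; split.
  by apply: Hymin; rewrite iterSr px.
move: Hy; case E: (depth T y) => [|m].
  by move=> /= /eqP yr'; rewrite yr' eqxx in yr.
by rewrite iterSr px ltnS => /Hxmin.
Qed.

Lemma iter_child x i : (i < depth T x)%N ->
  is_child T (iter i.+1 (parent T) x) (iter i (parent T) x).
Proof.
move=> Hi; apply/andP; split; last by rewrite iterS.
apply/negP => H.
have [_ Hmin] := depth_spec x.
by have := Hmin _ H; rewrite leqNgt Hi.
Qed.

Variable R : realType.
Variable q : V -> V -> R.

Lemma qpath_child x y : is_child T x y -> qpath T q y = q x y * qpath T q x.
Proof.
move=> Hc; have /andP[_ /eqP px] := Hc.
rewrite /qpath (depth_child Hc) big_ord_recl /= px; congr (_ * _).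
apply: eq_bigr => i _; rewrite add0n -!iterS.
by rewrite !iterSr px.
Qed.

Lemma qpath_gt0 x : (forall a b, 0 < q a b <-> is_child T a b) -> 0 < qpath T q x.
Proof.
move=> Hq; rewrite /qpath; apply: prodr_gt0 => i _.
by apply/Hq; apply: iter_child.
Qed.
End Tree.
Arguments depth_child {V T x y}.
Arguments qpath_child {V T R q x y}.
Arguments qpath_gt0 {V T R q}.


Lemma realC_neq0 (R : realType) (a : R) : a != 0 -> (a%:C)%C != 0 :> R[i].
Proof. by move=> a0; rewrite fmorph_eq0. Qed.

Theorem lemma6p1 (R : realType) (V : countType) (T : rooted_tree V)
    (q : V -> V -> R) (lambda : R[i]) :
  tree_stochastic T q -> lambda != 0 ->
  (forall sigma : V -> R[i], complex_distribution T sigma ->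
     lambda_harmonic T q lambda (poisson_transform T q lambda sigma)) /\
  (forall h : V -> R[i], lambda_harmonic T q lambda h ->
     exists! sigma : V -> R[i],
       complex_distribution T sigma /\ h = poisson_transform T q lambda sigma).
Proof.
move=> [q0 [_ Hq]] l0.
have Qn0 : forall x, ((qpath T q x)%:C)%C != 0 :> R[i].
  by move=> x; apply: realC_neq0; rewrite gt_eqF // qpath_gt0.
have qn0 : forall x y, is_child T x y -> ((q x y)%:C)%C != 0 :> R[i].
  by move=> x y Hc; apply: realC_neq0; rewrite gt_eqF //; apply/Hq.
have Ln0 : forall n, lambda ^+ n != 0 by move=> n; rewrite expf_neq0.
split.
- move=> sigma Hs x; have [Ha Hsum] := Hs x.
  set c := lambda ^+ (depth T x).+1 / ((qpath T q x)%:C)%C.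
  have c0 : c != 0 by rewrite mulf_neq0 // invr_neq0.
  have E : forall y, is_child T x y ->
      (fun y => c * sigma y) y = (fun y => ((q x y)%:C)%C * poisson_transform T q lambda sigma y) y.
    move=> y Hc /=; rewrite /poisson_transform /c (depth_child Hc) (qpath_child Hc) rmorphM /=.
    have := qn0 _ _ Hc; have := Qn0 x; move: (((q x y)%:C)%C) (((qpath T q x)%:C)%C) => a b bn an.
    by field; rewrite an bn.
  split.
    by apply: (eq_abs_summable E); apply: abs_summableZ.
  rewrite -(eq_csum E) csumZ // -Hsum /poisson_transform /c exprS.
  by rewrite !mulrA.
- move=> h Hh.
  pose sigma y := ((qpath T q y)%:C)%C / lambda ^+ depth T y * h y.
  exists sigma; split.
    split.
      move=> x; have [Ha Hsum] := Hh x.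
      set c := ((qpath T q x)%:C)%C / lambda ^+ (depth T x).+1.
      have c0 : c != 0 by rewrite mulf_neq0 // invr_neq0.
      have E : forall y, is_child T x y ->
        (fun y => c * (((q x y)%:C)%C * h y)) y = sigma y.
        move=> y Hc /=; rewrite /sigma /c (depth_child Hc) (qpath_child Hc) rmorphM /=.
        by rewrite !mulrA [_ * ((q x y)%:C)%C]mulrC !mulrA.
      split.
        by apply: (eq_abs_summable E); apply: abs_summableZ.
      rewrite -(eq_csum E) csumZ // Hsum /sigma /c exprS.
      have := Ln0 (depth T x); move: (lambda ^+ depth T x) => L Ln.
      by field; rewrite Ln l0.
    apply: funext => y; rewrite /poisson_transform /sigma.
    have := Ln0 (depth T y); have := Qn0 y.
    move: (lambda ^+ depth T y) (((qpath T q y)%:C)%C) => L Q Qn Ln.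
    by field; rewrite Ln Qn.
  move=> s' [_ Eh]; apply: funext => y; rewrite /sigma Eh /poisson_transform.
  have := Ln0 (depth T y); have := Qn0 y.
  move: (lambda ^+ depth T y) (((qpath T q y)%:C)%C) => L Q Qn Ln.
  by field; rewrite Ln Qn.
Qed.
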